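(* Let $n=2m$. Let $S_1=\{\bm{v}\in\mathbb{F}_{q^n}^n:\mathcal{P}_n(\bm{v})\in GL_n(\mathbb{F}_{q^n})\}$ and $S_2=\{\bm{v}\in\mathbb{F}_{q^m}^n:\mathcal{P}_n(\bm{v})\in GL_n(\mathbb{F}_{q^m})\}$. Let $T=\{\bm{v}\in\mathbb{F}_{q^n}^n:\mathrm{wt}_{q^m}(\bm{v})=2\text{ and }\mathcal{P}_n(\bm{v})\in GL_n(\mathbb{F}_{q^n})\}$ and let $\mathcal{N}$ be the number of distinct equivalence classes $\overline{\bm{v}}$ with $\bm{v}\in T$. Then $$\mathcal{N}=\frac{|S_1|}{|S_2|}-q^m-1.$$
   Context: $q$ is a prime power (the paper takes $q$ a power of $2$). For $\bm{v}=(v_0,\dots,v_{n-1})$, the circulant matrix $\mathcal{P}_n(\bm{v})$ is the $n\times n$ matrix with rows $(v_0,\dots,v_{n-1}),(v_{n-1},v_0,\dots,v_{n-2}),\dots,(v_1,\dots,v_{n-1},v_0)$ (each row the cyclic right shift of the previous one). $\mathcal{P}_n(\mathbb{F}_{q^m})$ denotes the set of $n\times n$ circulant matrices over $\mathbb{F}_{q^m}$. For $\bm{v}\in\mathbb{F}_{q^n}^n$, $\mathrm{wt}_{q^m}(\bm{v})$ is the dimension over $\mathbb{F}_{q^m}$ of the $\mathbb{F}_{q^m}$-linear span of the components of $\bm{v}$ (so it is $0,1$ or $2$). The equivalence class of $\bm{v}\in\mathbb{F}_{q^n}^n$ is $\overline{\bm{v}}=\{\bm{v}Q: Q\in\mathcal{P}_n(\mathbb{F}_{q^m})\cap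 GL_n(\mathbb{F}_{q^m})\}$. *)

(* Defs.v *)
From HB Require Import structures.
From mathcomp Require Import all_boot all_order all_algebra all_field.
Set Implicit Arguments. Unset Strict Implicit. Unset Printing Implicit Defensive.
Import GRing.Theory.
Local Open Scope ring_scope.

Section Defs.
Variable L : finFieldType.

(* The subfield F_{q^m} of L = F_{q^n} (n = 2m): elements fixed by x |-> x^(q^m). *)
Definition subF (qm : nat) : pred L := fun x => x ^+ qm == x.

(* circulant matrix P_n(v): entry (i,j) = v_{(j - i) mod n};
   row 0 is v, each row is the cyclic right shift of the previous one. *)
Definition cidx (n : nat) (i j : 'I_n) : 'I_n :=
  Ordinal (ltn_pmod (j + n - i) (leq_ltn_trans (leq0n i) (ltn_ord i))).
Definition circ (n : nat) (v : 'rV[L]_n) : 'M[L]_n :=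
  \matrix_(i < n, j < n) v 0 (cidx i j).

Definition mxin (K : pred L) (r c : nat) (A : 'M[L]_(r, c)) : bool :=
  [forall i, forall j, K (A i j)].

Definition GLin (K : pred L) (n : nat) (A : 'M[L]_n) : bool :=
  mxin K A && [exists B : 'M[L]_n, [&& mxin K B, A *m B == 1%:M & B *m A == 1%:M]].

Definition spans (K : pred L) (n r : nat) (v : 'rV[L]_n) : bool :=
  [exists b : {ffun 'I_r -> L}, forall i : 'I_n,
     exists c : {ffun 'I_r -> L},
       [forall j, K (c j)] && (v 0 i == \sum_(j < r) c j * b j)].

(* wt_K(v) = dimension over K of the K-span of the components of v
   = least r such that the span is spanned by r elements (r <= n always works) *)
Definition wt (K : pred L) (n : nat) (v : 'rV[L]_n) : nat :=
  find (fun r => spans K r v) (iota 0 n.+1).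

Definition eqclass (K : pred L) (n : nat) (v : 'rV[L]_n) : {set 'rV[L]_n} :=
  [set v *m circ u | u in [set u : 'rV[L]_n | mxin K u && GLin K (circ u)]].

End Defs.

(* Main.v *)
Require Import Defs.
From HB Require Import structures.
From mathcomp Require Import all_boot all_order all_algebra all_field.
From mathcomp Require Import zify ring.
Set Implicit Arguments. Unset Strict Implicit. Unset Printing Implicit Defensive.
Import GRing.Theory Num.Theory.
Local Open Scope ring_scope.

Lemma z1 (G : zmodType) (a b c : G) : a + b - (a + b - c) = c.
Proof. by rewrite opprB addrC subrK. Qed.
Lemma z2 (G : zmodType) (a b c : G) : a + b - c - a = b - c.
Proof. by rewrite addrAC [a+b]addrC addrK. Qed.
Lemma z3 (G : zmodType) (a b c : G) : b - (a + b - c) = c - a.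
Proof. by rewrite [a + b]addrC -addrA opprD addrA subrr add0r opprB. Qed.
Lemma z4 (G : zmodType) (a b c : G) : a - (c + b) = a - b - c.
Proof. by rewrite opprD addrA addrAC. Qed.

Section Fld.
Variable L : finFieldType.
Variable Q : nat.
Hypothesis ch2 : 2%N \in [pchar L].
Hypothesis Qnat : [pchar L].-nat Q.
Hypothesis Q2 : (1 < Q)%N.
Hypothesis cardL : #|L| = (Q * Q)%N.
Local Notation K := (@subF L Q).

Lemma KP x : reflect (x ^+ Q = x) (K x).
Proof. exact: eqP. Qed.

Lemma K0 : K 0. Proof. by apply/KP; rewrite expr0n; case: Q Q2. Qed.
Lemma K1 : K 1. Proof. by apply/KP; rewrite expr1n. Qed.
Lemma KD x y : K x -> K y -> K (x + y).
Proof. by move=> /KP hx /KP hy; apply/KP; rewrite exprDn_pchar // hx hy. Qed.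
Lemma KN x : K x -> K (- x).
Proof. by move=> /KP hx; apply/KP; rewrite exprNn_pchar // hx. Qed.
Lemma KM x y : K x -> K y -> K (x * y).
Proof. by move=> /KP hx /KP hy; apply/KP; rewrite exprMn hx hy. Qed.
Lemma KV x : K x -> K (x^-1).
Proof. by move=> /KP hx; apply/KP; rewrite exprVn hx. Qed.
Lemma KB x y : K x -> K y -> K (x - y).
Proof. by move=> hx hy; apply: KD => //; apply: KN. Qed.

Lemma card_fibers (T U : finType) (X : {set T}) (f : T -> U) (k : nat) :
  (forall x, x \in X -> #|[set x' in X | f x' == f x]| = k) ->
  #|X| = (#|f @: X| * k)%N.
Proof.
move=> hk; rewrite -sum1_card (partition_big f (mem (f @: X))) /=; last first.
  by move=> x hx; apply: imset_f.
rewrite -sum_nat_const; apply: eq_bigr => y /imsetP [x hx ->].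
rewrite -(hk x hx) -sum1_card; apply: eq_bigl => z; by rewrite inE.
Qed.

Lemma cardK_le : (#|K| <= Q)%N.
Proof.
have p0 : ('X^Q - 'X : {poly L}) != 0.
  rewrite -size_poly_eq0 size_polyDl ?size_polyXn // size_polyN size_polyX; lia.
have := max_poly_roots p0 _ (enum_uniq K).
rewrite size_polyDl ?size_polyXn ?size_polyN ?size_polyX -?cardE; last lia.
apply=> //; apply/allP=> x; rewrite mem_enum => /KP hx.
by rewrite /root !hornerE hx subrr.
Qed.


Lemma Kfrob x : K (x ^+ Q + x).
Proof.
apply/KP; rewrite exprDn_pchar // -exprM -[(Q*Q)%N]cardL expf_card addrC //.
Qed.

Lemma cardK : #|K| = Q.
Proof.
pose phi (x : L) := x ^+ Q + x.
have hfib : forall x0 : L, x0 \in [set: L] ->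
    #|[set x in [set: L] | phi x == phi x0]| = #|K|.
  move=> x0 _; rewrite -(card_imset K (addIr x0)).
  apply: eq_card => x; rewrite !inE.
  apply/eqP/imsetP => [h|[t ht ->]].
    exists (x - x0); last by rewrite subrK.
    apply/KP; have : phi (x - x0) = 0.
      have -> : phi (x - x0) = phi x - phi x0.
        by rewrite /phi exprDn_pchar // exprNn_pchar // addrACA opprD.
      by rewrite h subrr.
    rewrite /phi => /eqP; rewrite addr_eq0 => /eqP ->; exact: oppr_pchar2.
  move/KP: ht => ht; rewrite /phi exprDn_pchar // ht addrACA.
  by rewrite addrr_pchar2 // add0r.
have := card_fibers hfib; rewrite cardsT cardL.
have : (#|phi @: [set: L]| <= #|K|)%N.
  have -> : #|K| = #|[set x | K x]| by apply: eq_card => x; rewrite inE.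
  apply: subset_leq_card; apply/subsetP => y /imsetP [x _ ->].
  by rewrite inE Kfrob.
have := cardK_le; nia.
Qed.


Lemma Kbasis : exists alpha : L, forall x : L,
  exists c0 c1, [/\ K c0, K c1 & x = c0 + c1 * alpha].
Proof.
have [alpha halpha] : exists alpha, ~~ K alpha.
  apply/existsP; rewrite -negb_forall; apply/negP => /forallP hall.
  have : #|K| = #|L| by apply: eq_card => x; rewrite -topredE /= hall.
  rewrite cardK cardL; nia.
exists alpha => x.
pose KS := [set y | K y].
pose g (p : L * L) := p.1 + p.2 * alpha.
have ginj : {in setX KS KS &, injective g}.
  move=> [a0 a1] [b0 b1]; rewrite !inE /g /= => /andP [ha0 ha1] /andP [hb0 hb1] h.
  have e1 : a1 = b1.
    apply/eqP; apply: contraNT halpha => hne.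
    have : (a1 - b1) * alpha = b0 - a0.
      have -> : b0 = a0 + a1 * alpha - b1 * alpha by rewrite h addrK.
      ring.
    move/(congr1 (fun z => (a1 - b1)^-1 * z)); rewrite mulrA mulVf ?subr_eq0 //.
    by rewrite mul1r => ->; apply: KM; apply: KV || apply: KB => //; apply: KB.
  by move: h; rewrite e1 => /addIr ->.
have hcard : #|g @: setX KS KS| = #|L|.
  by rewrite (card_in_imset ginj) cardsX cardL !cardsE cardK.
have : x \in g @: setX KS KS.
  have -> : g @: setX KS KS = [set: L].
    apply/eqP; rewrite eqEcard subsetT cardsT hcard /=. by [].
  by rewrite inE.
by case/imsetP => [[c0 c1]]; rewrite !inE /= => /andP [h0 h1] ->; exists c0, c1.
Qed.


Variable n' : nat.
Local Notation n := n'.+1.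

Lemma cidxE (i j : 'I_n) : cidx i j = (j - i)%R.
Proof. by apply: val_inj; rewrite /= modnDmr addnBA // ltnW. Qed.

Lemma circE (v : 'rV[L]_n) i j : circ v i j = v 0 (j - i).
Proof. by rewrite mxE cidxE. Qed.

Lemma circ_mul (u w : 'rV[L]_n) : circ (u *m circ w) = circ u *m circ w.
Proof.
apply/matrixP => i j; rewrite circE !mxE.
under eq_bigr do rewrite circE.
under [RHS]eq_bigr do rewrite !circE.
rewrite [RHS](reindex_inj (addIr i)); apply: eq_bigr => k _.
by rewrite addrK z4.
Qed.

Lemma circ_comm (u w : 'rV[L]_n) : circ u *m circ w = circ w *m circ u.
Proof.
apply/matrixP => i j; rewrite !mxE.
pose h (k : 'I_n) := i + j - k.
have hK : cancel h h by move=> k; rewrite /h z1.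
rewrite [RHS](reindex_inj (can_inj hK)); apply: eq_bigr => k _.
rewrite !circE /h mulrC; congr (_ * _); congr (_ _ _).
  by rewrite z2.
by rewrite z3.
Qed.


Lemma rowcirc (u : 'rV[L]_n) : row 0 (circ u) = u.
Proof. by apply/rowP => j; rewrite mxE circE subr0. Qed.

Lemma conv_comm (u w : 'rV[L]_n) : u *m circ w = w *m circ u.
Proof. by rewrite -{1}[u]rowcirc -row_mul circ_comm row_mul rowcirc. Qed.

Definition e0 : 'rV[L]_n := delta_mx 0 0.

Lemma circ_e0 : circ e0 = 1%:M.
Proof.
apply/matrixP => i j; rewrite circE !mxE eqxx /= subr_eq0.
by rewrite eq_sym.
Qed.

Lemma mxinP r c (A : 'M[L]_(r, c)) : reflect (forall i j, K (A i j)) (mxin K A).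
Proof.
apply: (iffP forallP) => [h i j|h i]; first by move/forallP: (h i).
by apply/forallP.
Qed.

Lemma Ksum (I : finType) (P : pred I) (F : I -> L) :
  (forall i, P i -> K (F i)) -> K (\sum_(i | P i) F i).
Proof. by move=> h; apply: (big_ind K) => //; [exact: K0 | exact: KD]. Qed.

Lemma Kprod (I : finType) (P : pred I) (F : I -> L) :
  (forall i, P i -> K (F i)) -> K (\prod_(i | P i) F i).
Proof. by move=> h; apply: (big_ind K) => //; [exact: K1 | exact: KM]. Qed.

Lemma Ksign (b : bool) : K ((-1) ^+ b).
Proof. by case: b; rewrite ?expr1 ?expr0; [apply: KN|]; exact: K1. Qed.

Lemma mxin_mul r c d (A : 'M[L]_(r, c)) (B : 'M[L]_(c, d)) :
  mxin K A -> mxin K B -> mxin K (A *m B).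
Proof.
move=> /mxinP hA /mxinP hB; apply/mxinP => i j; rewrite mxE.
by apply: Ksum => k _; apply: KM.
Qed.

Lemma mxin_scale r c (a : L) (A : 'M[L]_(r, c)) :
  K a -> mxin K A -> mxin K (a *: A).
Proof. by move=> ha /mxinP hA; apply/mxinP => i j; rewrite mxE; apply: KM. Qed.

Lemma mxin_circ (u : 'rV[L]_n) : mxin K u -> mxin K (circ u).
Proof. by move=> /mxinP h; apply/mxinP => i j; rewrite circE. Qed.

Lemma Kdet k (A : 'M[L]_k) : mxin K A -> K (\det A).
Proof.
move=> /mxinP h; apply: Ksum => s _; apply: KM; first exact: Ksign.
by apply: Kprod => i _.
Qed.

Lemma mxin_inv k (A : 'M[L]_k) : mxin K A -> mxin K (invmx A).
Proof.
move=> hA; rewrite /invmx; case: ifP => // _.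
apply: mxin_scale; first by apply: KV; apply: Kdet.
apply/mxinP => i j; rewrite mxE /cofactor; apply: KM.
  by rewrite -signr_odd; apply: Ksign.
by apply: Kdet; move/mxinP: hA => hA; apply/mxinP => a b; rewrite !mxE.
Qed.

Lemma GLinE (u : 'rV[L]_n) : mxin K u ->
  GLin K (circ u) = (circ u \in unitmx).
Proof.
move=> hu; apply/idP/idP.
  by case/andP => _ /existsP [B /and3P [_ /eqP h _]]; case: (mulmx1_unit h).
move=> hU; rewrite /GLin mxin_circ //=; apply/existsP; exists (invmx (circ u)).
by rewrite mxin_inv ?mxin_circ // mulmxV // mulVmx // !eqxx.
Qed.


Definition S2s := [set u : 'rV[L]_n | mxin K u && (circ u \in unitmx)].

Lemma S2E : [set v : 'rV[L]_n | mxin K v && GLin K (circ v)] = S2s.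
Proof.
apply/setP => v; rewrite !inE; case hv: (mxin K v) => //=; exact: GLinE.
Qed.

Lemma e0_S2 : e0 \in S2s.
Proof.
rewrite inE circ_e0 unitmx1 andbT; apply/mxinP => i j; rewrite mxE.
by case: (_ && _); [exact: K1 | exact: K0].
Qed.

Lemma circ_inj (A : 'M[L]_n) : A \in unitmx -> injective (mulmx^~ A : 'rV[L]_n -> 'rV[L]_n).
Proof. by move=> uA; apply: (can_inj (mulmxK uA)). Qed.

Lemma S2_mul u w : u \in S2s -> w \in S2s -> u *m circ w \in S2s.
Proof.
rewrite !inE => /andP [hu uu] /andP [hw uw].
by rewrite mxin_mul ?mxin_circ // circ_mul unitmx_mul uu uw.
Qed.

Lemma S2_surj u : u \in S2s -> [set x *m circ u | x in S2s] = S2s.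
Proof.
move=> hu; apply/eqP; rewrite eqEcard card_in_imset; last first.
  by move=> x y _ _; apply: circ_inj; move: hu; rewrite inE => /andP [].
rewrite leqnn andbT; apply/subsetP => y /imsetP [x hx ->]; exact: S2_mul.
Qed.

Lemma eqclassE (v : 'rV[L]_n) : eqclass K v = [set v *m circ u | u in S2s].
Proof. by rewrite /eqclass S2E. Qed.

Lemma eqclass_mul (v : 'rV[L]_n) u : u \in S2s -> eqclass K (v *m circ u) = eqclass K v.
Proof.
move=> hu; rewrite !eqclassE -{2}(S2_surj hu) -imset_comp.
apply: eq_imset => x /=; by rewrite -!mulmxA circ_mul circ_comm.
Qed.

Lemma eqclass_card (v : 'rV[L]_n) : circ v \in unitmx -> #|eqclass K v| = #|S2s|.
Proof.
move=> uv; rewrite eqclassE card_in_imset // => x y _ _.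
by rewrite !(conv_comm v); apply: circ_inj.
Qed.

Lemma eqclass_self (v : 'rV[L]_n) : v \in eqclass K v.
Proof. by rewrite eqclassE; apply/imsetP; exists e0; rewrite ?e0_S2 // circ_e0 mulmx1. Qed.


Lemma spans1P (v : 'rV[L]_n) :
  reflect (exists b, exists2 w, mxin K w & v = b *: w) (spans K 1 v).
Proof.
apply: (iffP existsP) => [[b /forallP hall]|[b [w hw ->]]].
  pose P i (c : {ffun 'I_1 -> L}) :=
    [forall j, K (c j)] && (v 0 i == \sum_(j < 1) c j * b j).
  pose w := \row_i (odflt [ffun=> 0] [pick c | P i c]) ord0.
  have hP i : P i (odflt [ffun=> 0] [pick c | P i c]).
    case: pickP => //= h; move/existsP: (hall i) => [c hc].
    by move: (h c); rewrite /P hc.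
  exists (b ord0); exists w.
    apply/mxinP => i j; rewrite mxE; move: (hP j) => /andP [/forallP h _].
    exact: h.
  apply/rowP => i; rewrite !mxE.
  move: (hP i) => /andP [_ /eqP ->]; rewrite big_ord1 mulrC.
  by [].
exists [ffun=> b]; apply/forallP => i; apply/existsP.
exists [ffun=> w 0 i]; rewrite big_ord1 !ffunE mxE mulrC eqxx andbT.
by apply/forallP => j; rewrite ffunE; move/mxinP: hw; apply.
Qed.

Lemma spans2 (v : 'rV[L]_n) : spans K 2 v.
Proof.
have [alpha ha] := Kbasis.
apply/existsP; exists [ffun j : 'I_2 => if j == 0 then 1 else alpha].
apply/forallP => i; have [c0 [c1 [h0 h1 e]]] := ha (v 0 i).
apply/existsP; exists [ffun j : 'I_2 => if j == 0 then c0 else c1].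
apply/andP; split.
  by apply/forallP => j; rewrite ffunE; case: ifP.
by rewrite !big_ord_recl big_ord0 !ffunE /= mulr1 addr0 e.
Qed.

Lemma spans01 (v : 'rV[L]_n) : spans K 0 v -> spans K 1 v.
Proof.
move=> /existsP [b /forallP h]; apply/spans1P; exists 0; exists 0.
  by apply/mxinP => i j; rewrite mxE; exact: K0.
apply/rowP => i; rewrite !mxE mul0r.
by move/existsP: (h i) => [c /andP [_ /eqP ->]]; rewrite big_ord0.
Qed.

Lemma wtE (v : 'rV[L]_n) : (2 <= n)%N -> (wt K v == 2)%N = ~~ spans K 1 v.
Proof.
move=> h2; rewrite /wt.
have -> : iota 0 n.+1 = [:: 0, 1, 2 & iota 3 (n.+1 - 3)]%N.
  by rewrite -{1}(subnKC (_ : 3 <= n.+1)%N) // iotaD.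
rewrite /= spans2; case h0: (spans K 0 v); first by rewrite spans01.
by case: (spans K 1 v).
Qed.


Definition S1s := [set v : 'rV[L]_n | circ v \in unitmx].
Definition Ts := [set v : 'rV[L]_n | (wt K v == 2)%N && (circ v \in unitmx)].
Definition As := [set v in S1s | spans K 1 v].

Lemma circZ (c : L) (w : 'rV[L]_n) : circ (c *: w) = c *: circ w.
Proof. by apply/matrixP => i j; rewrite [RHS]mxE !circE mxE. Qed.

Lemma circ0_nunit : (circ (0 : 'rV[L]_n) \in unitmx) = false.
Proof.
have -> : circ (0 : 'rV[L]_n) = 0 by apply/matrixP => i j; rewrite circE !mxE.
by rewrite unitmxE det0 unitr0.
Qed.

Lemma spans1_back (v : 'rV[L]_n) u : u \in S2s ->
  spans K 1 (v *m circ u) -> spans K 1 v.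
Proof.
rewrite inE => /andP [hu uu] /spans1P [b [w hw e]].
apply/spans1P; exists b; exists (w *m invmx (circ u)).
  by apply: mxin_mul => //; apply: mxin_inv; apply: mxin_circ.
by rewrite scalemxAl -e mulmxK.
Qed.

Lemma eqclass_sub (v : 'rV[L]_n) : (2 <= n)%N -> v \in Ts -> eqclass K v \subset Ts.
Proof.
move=> h2; rewrite inE wtE // => /andP [hs uv].
apply/subsetP => y; rewrite eqclassE => /imsetP [u hu ->].
rewrite inE wtE // circ_mul unitmx_mul uv.
move: (hu); rewrite inE => /andP [_ -> ]; rewrite andbT.
rewrite andbT; apply: contra hs => h; exact: spans1_back hu h.
Qed.

Lemma T_card : (2 <= n)%N ->
  #|Ts| = (#|[set eqclass K v | v in Ts]| * #|S2s|)%N.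
Proof.
move=> h2; apply: card_fibers => x hx.
have ux : circ x \in unitmx by move: hx; rewrite inE => /andP [].
rewrite -(eqclass_card ux); apply: eq_card => y; rewrite inE.
apply/andP/idP => [[hy /eqP <-]|hy]; first exact: eqclass_self.
split; first exact: (subsetP (eqclass_sub h2 hx)).
move: hy; rewrite eqclassE => /imsetP [u hu ->].
by rewrite eqclass_mul // eqclassE.
Qed.

Lemma KS_card : #|[set t : L | K t & t != 0]| = (Q - 1)%N.
Proof.
have h := cardsD1 0 [set t : L | K t]; rewrite inE K0 cardsE cardK in h.
rewrite [in RHS]h add1n subn1 /=; apply: eq_card => t; rewrite !inE andbC.
by [].
Qed.

Lemma A_card : (#|As| * (Q - 1) = (Q * Q - 1) * #|S2s|)%N.
Proof.
pose P := setX [set~ (0 : L)] S2s.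
pose f (p : L * 'rV[L]_n) := p.1 *: p.2.
have hP : #|P| = ((Q * Q - 1) * #|S2s|)%N by rewrite cardsX cardsC1 cardL subn1.
have himg : f @: P = As.
  apply/setP => v; apply/imsetP/idP => [[[c w]]|].
    move=> hp ->; move: hp; rewrite /P !inE /= => /andP [cnz].
    move=> /andP [hw uw].
    rewrite /f /= circZ unitmxZ ?unitfE // uw /=.
    by apply/spans1P; exists c; exists w.
  rewrite /As /S1s !inE => /andP [uv /spans1P [b [w hw e]]].
  have bnz : b != 0.
    by apply: contraTneq uv => bz; rewrite e bz scale0r circ0_nunit.
  exists (b, w); last by [].
  rewrite /P !inE bnz /= hw /=.
  by move: uv; rewrite e circZ unitmxZ // unitfE.
rewrite -hP -himg -KS_card; apply/esym/card_fibers => [[c w]].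
rewrite /P !inE /= => /andP [cnz] /andP [hw uw].
pose g (t : L) := (c / t, t *: w).
have ginj : {in [set t : L | K t & t != 0] &, injective g}.
  move=> t1 t2; rewrite !inE => /andP [_ t1nz] /andP [_ t2nz] [].
  by move/(mulfI cnz)/invr_inj.
rewrite -(card_in_imset ginj); apply: eq_card => [[c' w']].
rewrite !inE /=; apply/idP/imsetP.
  move=> /andP [/and3P [c'nz hw' uw'] /eqP e].
  have wnz : w != 0 by apply: contraTneq uw => ->; rewrite circ0_nunit.
  have [i wi] : exists i, w 0 i != 0.
    apply/existsP; apply: contraNT wnz; rewrite negb_exists => /forallP h.
    by apply/eqP/rowP => i; rewrite mxE; move: (h i); rewrite negbK => /eqP ->.
  have ei : c' * w' 0 i = c * w 0 i.
    by move/rowP/(_ i): e; rewrite /f /= !mxE.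
  exists (c / c').
    rewrite !inE mulf_neq0 ?invr_eq0 // andbT.
    have -> : c / c' = w' 0 i / w 0 i.
      apply: (mulIf wi); rewrite divfK //; apply: (mulfI c'nz).
      by rewrite mulrCA mulrA divfK // ei.
    have Kw' := elimT (mxinP _) hw'; have Kw := elimT (mxinP _) hw.
    by apply: KM; [apply: Kw' | apply: KV; apply: Kw].
  rewrite /g; f_equal; first by rewrite invf_div mulrCA divff // mulr1.
  move: e; rewrite /f /= => e.
  by rewrite mulrC -scalerA -e scalerA mulVf // scale1r.
move=> [t]; rewrite !inE => /andP [ht tnz] [-> ->].
rewrite mulf_neq0 ?invr_eq0 //= mxin_scale //= circZ unitmxZ ?unitfE // uw.
by rewrite /f /= scalerA divfK.
Qed.


Lemma main_gen : (1 < n)%N ->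
  (#|[set eqclass K v | v in Ts]|%:R : rat) =
  #|S1s|%:R / #|[set v : 'rV[L]_n | mxin K v && GLin K (circ v)]|%:R - Q%:R - 1.
Proof.
move=> h2; rewrite S2E.
have hS1 : #|S1s| = (#|As| + #|Ts|)%N.
  rewrite -(cardsID [set v | spans K 1 v] S1s); congr (_ + _)%N.
    by apply: eq_card => v; rewrite !inE.
  by apply: eq_card => v; rewrite !inE wtE // andbC.
have S2pos : (0 < #|S2s|)%N by apply/card_gt0P; exists e0; exact: e0_S2.
have hA : #|As| = ((Q + 1) * #|S2s|)%N.
  apply/eqP; rewrite -(eqn_pmul2r (_ : 0 < Q - 1)%N); last by lia.
  by rewrite A_card; apply/eqP; nia.
rewrite hS1 hA (T_card h2) !natrD !natrM.
have : (#|S2s|%:R : rat) != 0 by rewrite pnatr_eq0 -lt0n.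
move: (#|S2s|%:R : rat) => s hs; rewrite natrD; field.
exact: hs.
Qed.

End Fld.


Theorem proposition7 (L : finFieldType) (q m : nat)
  (hq : exists k : nat, (0 < k)%N /\ q = (2 ^ k)%N)
  (hL : #|L| = (q ^ (2 * m))%N) :
  let n := (2 * m)%N in
  let K := @subF L (q ^ m) in
  let S1 := [set v : 'rV[L]_n | circ v \in unitmx] in
  let S2 := [set v : 'rV[L]_n | mxin K v && GLin K (circ v)] in
  let T := [set v : 'rV[L]_n | (wt K v == 2)%N && (circ v \in unitmx)] in
  let N := #|[set eqclass K v | v in T]| in
  (N%:R : rat) = (#|S1|%:R / #|S2|%:R) - (q ^ m)%:R - 1.
Proof.
case: hq hL => k [k0 ->] {q}.
case: m => [|m'] hL.
  by have := finNzRing_gt1 L; rewrite hL.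
have cardL : #|L| = ((2 ^ k) ^ m'.+1 * (2 ^ k) ^ m'.+1)%N.
  by rewrite hL mul2n -addnn expnD.
have ch2 : 2%N \in [pchar L].
  apply: card_finPcharP; last by []. by rewrite hL -expnM.
have Qnat : [pchar L].-nat ((2 ^ k) ^ m'.+1)%N.
  by rewrite !pnatX (pnatE _ (isT : prime 2)) ch2.
have Q2 : (1 < (2 ^ k) ^ m'.+1)%N.
  by rewrite -expnM -{1}(expn0 2) ltn_exp2l // muln_gt0 k0.
have h2 : (1 < (2 * m'.+1).-1.+1)%N by rewrite prednK ?muln_gt0 //; lia.
have h := (@main_gen L _ ch2 Qnat Q2 cardL (2 * m'.+1).-1 h2).
exact h.
Qed.
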